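(* Let $p(m,n)$, for integers $m,n\ge 0$ with $m+n>0$, be the unique function satisfying the recurrence $$p(m,n)=\frac{n}{m+n}\,p(m-1,n)+\frac{m}{m+n}\,p(m,n-1)\qquad (m>0,\ n>0)$$ with boundary conditions $p(m,0)=0$ for $m>0$ and $p(0,n)=1$ for $n>0$. Then for all integers $m\ge 0$, $n\ge 0$ with $m+n>0$, $$p(m,n)=\sum_{j=0}^{n}\frac{(-1)^j}{j!}\,\frac{(n-j)^{m+n}}{(m+n-j)!}.$$
   Context: ''War of ruins'': two armies A and B start with $m$ and $n$ soldiers. At each discrete step, while both are positive, with probability $m/(m+n)$ army B loses one soldier ($(m,n)\to(m,n-1)$) and with probability $n/(m+n)$ army A loses one soldier ($(m,n)\to(m-1,n)$). $p(m,n)$ is the probability that army A is reduced to $0$ soldiers before army B is; it is characterized by the recurrence and boundary conditions stated in the claim. *)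

(* Defs.v *)
From HB Require Import structures.
From mathcomp Require Import all_boot all_order all_algebra.
Set Implicit Arguments. Unset Strict Implicit. Unset Printing Implicit Defensive.
Import Order.TTheory GRing.Theory Num.Theory.
Local Open Scope ring_scope.

Definition war_of_ruins (p : nat -> nat -> rat) : Prop :=
  [/\ (forall m n : nat, (0 < m)%N -> (0 < n)%N ->
        p m n = (n%:R / (m + n)%:R) * p m.-1 n + (m%:R / (m + n)%:R) * p m n.-1),
      (forall m : nat, (0 < m)%N -> p m 0%N = 0)
    & (forall n : nat, (0 < n)%N -> p 0%N n = 1)].

(* Main.v *)
Require Import Defs.
From HB Require Import structures.
From mathcomp Require Import all_boot all_order all_algebra.
From mathcomp Require Import zify ring lra.
Import Order.TTheory GRing.Theory Num.Theory.
Local Open Scope ring_scope.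

Definition U (n k : nat) : rat :=
  \sum_(j < n.+1) (-1) ^+ j * 'C(n, j)%:R * ((n - j)%N%:R) ^+ k.

Lemma U_rec n k : U n.+1 k.+1 = n.+1%:R * \sum_(l < k.+1) 'C(k, l)%:R * U n l.
Proof.
rewrite /U big_ord_recr /= subnn expr0n /= mulr0 addr0.
transitivity (\sum_(j < n.+1) (n.+1%:R : rat) * ((-1) ^+ j * 'C(n, j)%:R * ((n - j)%N%:R + 1) ^+ k)).
  apply: eq_bigr => j _.
  have hj : (j <= n)%N by rewrite -ltnS.
  have h1 : (n.+1 - j = (n - j).+1)%N by rewrite subSn.
  have h2 := mul_bin_down n.+1 j. rewrite /= h1 in h2.
  rewrite h1 exprS -[((n - j).+1)%:R]natr1.
  have h3 : ('C(n.+1, j)%:R : rat) * ((n - j)%:R + 1) = n.+1%:R * 'C(n, j)%:R.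
    by rewrite natr1 -!natrM mulnC -h2.
  transitivity ((-1)^+j * ('C(n.+1,j)%:R * ((n-j)%:R + 1)) * ((n - j)%:R + 1) ^+ k : rat); first by ring.
  by rewrite h3; ring.
rewrite -mulr_sumr; congr (_ * _).
have E : forall x : rat, (x + 1) ^+ k = \sum_(i < k.+1) x ^+ i *+ 'C(k, i) by move=> x; exact: exprD1n.
under [in LHS]eq_bigr => j _ do rewrite E mulr_sumr.
rewrite exchange_big /=; apply: eq_bigr => l _.
rewrite mulr_sumr; apply: eq_bigr => j _.
rewrite mulrnAr -mulr_natl. ring.
Qed.

Lemma U0 n : U n.+1 0 = 0.
Proof.
rewrite /U.
have := exprD1n (-1 : rat) n.+1. rewrite addNr exprS mul0r => h; rewrite [RHS]h.
by apply: eq_bigr => j _; rewrite expr0 mulr1; exact: mulr_natr.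
Qed.

Lemma U_val n k : (k <= n)%N -> U n k = if k == n then (n`!)%:R else 0.
Proof.
elim: n k => [|n IH] k.
  rewrite leqn0 => /eqP ->; rewrite /U big_ord1 /= expr0 !mulr1 /=. done.
case: k => [|k] hk; first by rewrite U0.
rewrite U_rec eqSS.
have hk' : (k <= n)%N by [].
have hl : forall l : 'I_k.+1, (l <= n)%N by move=> l; rewrite (leq_trans _ hk') // -ltnS.
under eq_bigr => l _ do rewrite (IH l (hl l)).
case: eqP => [ek|nek].
  subst k; rewrite big_ord_recr /= eqxx big1 ?add0r.
    by rewrite binn mul1r factS natrM.
  move=> l _; have : (l != n :> nat) by rewrite neq_ltn ltn_ord.
  by move/negbTE ->; rewrite mulr0.
rewrite big1 ?mulr0 // => l _.
have : (l != n :> nat).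
  apply/eqP => e; have := ltn_ord l; rewrite e ltnS => h; apply: nek; apply/eqP; rewrite eqn_leq h hk'.
  done.
by move/negbTE ->; rewrite mulr0.
Qed.

Definition F (m n : nat) : rat := \sum_(0 <= j < n.+1)
              ((-1) ^+ j / (j`!)%:R) * (((n - j)%N%:R ^+ (m + n)) / ((m + n - j)`!)%:R).

Lemma F_m0 m : (0 < m)%N -> F m 0 = 0.
Proof.
move=> hm; rewrite /F big_nat1 addn0 sub0n expr0n.
by case: m hm => // m _; rewrite /= mul0r mulr0.
Qed.

Lemma F_0n n : F 0 n = 1.
Proof.
have h := @U_val n n (leqnn n); rewrite eqxx in h.
have hf : (n`!)%:R != 0 :> rat by rewrite pnatr_eq0 -lt0n fact_gt0.
rewrite /F big_mkord add0n.
transitivity (U n n / (n`!)%:R); last by rewrite h divff.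
rewrite /U mulr_suml; apply: eq_bigr => j _.
have hj : (j <= n)%N by rewrite -ltnS.
have hb := bin_fact hj.
have e : ('C(n, j)%:R : rat) = (n`!)%:R / ((j`!)%:R * ((n - j)`!)%:R).
  rewrite -hb !natrM mulfK //.
  by rewrite mulf_neq0 // pnatr_eq0 -lt0n fact_gt0.
rewrite e.
have h1 : (j`!)%:R != 0 :> rat by rewrite pnatr_eq0 -lt0n fact_gt0.
have h2 : ((n - j)`!)%:R != 0 :> rat by rewrite pnatr_eq0 -lt0n fact_gt0.
by field; rewrite h1 h2 hf.
Qed.

Lemma fact_neq0 k : (k`!)%:R != 0 :> rat.
Proof. by rewrite pnatr_eq0 -lt0n fact_gt0. Qed.

Lemma F_shift m n : F m.+1 n = \sum_(0 <= j < n.+2)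
   - ((-1) ^+ j * j%:R / (j`!)%:R) * ((n.+1 - j)%N%:R ^+ (m + n.+1) / ((m.+1 + n.+1 - j)`!)%:R).
Proof.
rewrite big_nat_recl // mulr0n mulr0 mul0r oppr0 mul0r add0r /F.
apply: eq_big_nat => j _.
rewrite subSS [(m.+1 + n.+1)%N]addnS subSS -addSnnS.
rewrite factS natrM exprS.
have h1 := fact_neq0 j.
have h2 : (j.+1)%:R != 0 :> rat by rewrite pnatr_eq0.
field; by rewrite fact_neq0 h1 addrC natr1 h2.
Qed.

Lemma F_rec m n : (m.+1 + n.+1)%:R * F m.+1 n.+1 = n.+1%:R * F m n.+1 + m.+1%:R * F m.+1 n.
Proof.
rewrite [F m.+1 n]F_shift /F !mulr_sumr -big_split /=.
apply: eq_big_nat => j /andP[_ hj].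
have hj' : (j <= n.+1)%N by [].
set d := (n.+1 - j)%N.
have ed : n.+1 = (j + d)%N by rewrite /d subnKC.
have e2 : (m.+1 + n.+1 - j)%N = (m + d).+1 by rewrite ed; lia.
have e3 : (m + n.+1 - j)%N = (m + d)%N by rewrite ed; lia.
rewrite e2 e3 ed factS addSn exprS.
have h1 := fact_neq0 j.
have h2 := fact_neq0 (m + d).
rewrite -[(m + d).+1]addn1 !natrM -!natr1 !natrD.
have h3 : (m%:R + d%:R + 1 : rat) != 0 by rewrite -natrD natr1 pnatr_eq0.
field; by rewrite h1 h2 h3.
Qed.

Theorem proposition1 (p : nat -> nat -> rat) :
  war_of_ruins p ->
  forall m n : nat, (0 < m + n)%N ->
    p m n = \sum_(0 <= j < n.+1)
              ((-1) ^+ j / (j`!)%:R) * (((n - j)%N%:R ^+ (m + n)) / ((m + n - j)`!)%:R).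
Proof.
move=> [hrec h0 h1] m n hmn.
change (p m n = F m n).
suff H : forall s m n, (m + n <= s)%N -> (0 < m + n)%N -> p m n = F m n.
  exact: H (leqnn _) hmn.
elim=> [|s IH] {m n hmn} m n hs hmn; first by exfalso; lia.
case: m hs hmn => [|m] hs hmn; first by rewrite h1 ?F_0n.
case: n hs hmn => [|n] hs hmn; first by rewrite h0 ?F_m0.
rewrite hrec // /= !IH //; try lia.
have hN : (m.+1 + n.+1)%:R != 0 :> rat by rewrite pnatr_eq0 addnS.
apply: (mulfI hN); rewrite F_rec.
field; have -> : (1 + m%:R + (1 + n%:R) : rat) = (m.+1 + n.+1)%:R by rewrite natrD -!natr1; ring.
by [].
Qed.
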